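(* Let $m\ge1$, $k\ge1$, $n\ge2$, let $\ell=(\ell_1,\dots,\ell_m)$ with $\ell_i\ge0$, $\sum_i\ell_i=1$, and let $\mathbf{P}=(p_{ij})$ be a symmetric $m\times m$ matrix with entries in $[0,1]$. Let $G=(V,E)$ be a random graph on $n=|V|$ nodes drawn from $\mathcal{W}_k(\mathbf{P},\ell)$, and let $s=\sum_{i,j\in[m]}p_{ij}\ell_i\ell_j$. Then: (i) for every integer $1\le d\le n-1$, $$\mathbb{E}[S_d]=n\binom{n-1}{d}\Bigl(\sum_{i_1,\dots,i_{d+1}\in[m]}\prod_{j=2}^{d+1}p_{i_1i_j}\prod_{j=1}^{d+1}\ell_{i_j}\Bigr)^k;$$ in particular $\mathbb{E}[S_2]=n\binom{n-1}{2}\bigl(\sum_{i_1,i_2,i_3\in[m]}p_{i_1i_2}p_{i_1i_3}\ell_{i_1}\ell_{i_2}\ell_{i_3}\bigr)^k$. (ii) The variance of the number of edges is $$\operatorname{Var}(|E|)=\binom{n}{2}s^k\Bigl(1-\binom{n}{2}s^k\Bigr)+2\,\mathbb{E}[S_2]+\binom{n}{2}\binom{n-2}{2}s^{2k}.$$ (iii) For every integer $2\le t\le n$, $\mathbb{E}[C_t]=\binom{n}{t}s_t^k$, where $$s_t=\sum_{i_1,\dots,i_t\in[m]}\Bigl(\prod_{1\le j<q\le t}p_{i_ji_q}\Bigr)\ell_{i_1}\ell_{i_2}\cdots\ell_{i_t};$$ in particular $\mathbb{E}[C_3]=\binom{n}{3}\bigl(\sum_{i,j,t\in[m]}p_{ij}p_{it}p_{jt}\ell_i\ell_j\ell_t\bigr)^k$.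 (iv) Writing $D_d$ for the number of nodes of degree exactly $d$, one has $\mathbb{E}[D_{n-1}]=\mathbb{E}[S_{n-1}]$ and, for $1\le d\le n-2$, $$\mathbb{E}[D_d]=\mathbb{E}[S_d]-\sum_{i=d+1}^{n-1}\binom{i}{d}\mathbb{E}[D_i].$$
   Context: Multifractal network generator (MFNG). Given $m$, $\ell$, $\mathbf{P}$ and a recursion depth $k\ge1$, $\mathcal{W}_k(\mathbf{P},\ell)$ is the distribution of the undirected random graph on $n$ nodes produced as follows. (1) Partition $[0,1]$ into $m$ consecutive subintervals of lengths $\ell_1,\dots,\ell_m$; recursively partition each into $m$ pieces with relative lengths $\ell_1,\dots,\ell_m$, for $k$ levels in total, giving $m^k$ intervals indexed by $(i_1,\dots,i_k)\in[m]^k$ of lengths $\prod_r\ell_{i_r}$. (2) Each node is placed at an independent uniform point of $[0,1]$ and receives the category tuple $c(u)=(i_1,\dots,i_k)$ of its interval. (3) Conditionally on the categories, independently for each pair of distinct nodes $u,v$ with $c(u)=(i_1,\dots,i_k)$, $c(v)=(j_1,\dots,j_k)$, the edge $\{u,v\}$ is present with probability $\prod_{r=1}^kp_{i_rj_r}$. Subgraph counts. A $d$-star is a graph on $d+1$ vertices in which one center vertex is joined to each of the other $d$ vertices (and no other edges). $S_d$ denotes the number of (not necessarily induced) $d$-stars in $G$, counted as the number of pairs $(v,D)$ with $v\in V$ and $D$ a $d$-element subset of the neighbors of $v$; $2$-stars are called wedges. A $t$-clique is a set of $t$ vertices that are pairwise adjacent; $C_t$ denotes the number of $t$-cliques in $G$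 ($3$-cliques are triangles). *)

(* Defs.v *)
From HB Require Import structures.
From mathcomp Require Import all_boot all_order all_algebra.
Set Implicit Arguments. Unset Strict Implicit. Unset Printing Implicit Defensive.
Import Order.TTheory GRing.Theory Num.Theory.
Local Open Scope ring_scope.

Section MFNG.
Variables (R : realFieldType) (n k m : nat).
Variables (P : 'M[R]_m) (l : 'I_m -> R).

Definition cattuple := {ffun 'I_k -> 'I_m}.
Definition catassign := {ffun 'I_n -> cattuple}.

(* Probability that an independent uniform point of [0,1] falls in the
   interval indexed by (i_1,...,i_k): its length prod_r l_{i_r}. *)
Definition cat_prob (c : catassign) : R :=
  \prod_(u : 'I_n) \prod_(r : 'I_k) l (c u r).

Definition edge_prob (c : catassign) (u v : 'I_n) : R :=
  \prod_(r : 'I_k) P (c u r) (c v r).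

(* A graph on node set 'I_n is encoded by its edge set E, a set of pairs
   (u,v) with u < v (each unordered pair {u,v} stored once). *)
Definition upper_pair (p : 'I_n * 'I_n) : bool := (p.1 < p.2)%N.

Definition well_formed (E : {set 'I_n * 'I_n}) : bool :=
  [forall p in E, upper_pair p].

Definition mfng_weight (c : catassign) (E : {set 'I_n * 'I_n}) : R :=
  cat_prob c * (well_formed E)%:R *
  \prod_(p : 'I_n * 'I_n | upper_pair p)
     (if p \in E then edge_prob c p.1 p.2 else 1 - edge_prob c p.1 p.2).

Definition mfng_E (X : {set 'I_n * 'I_n} -> R) : R :=
  \sum_(c : catassign) \sum_(E : {set 'I_n * 'I_n}) mfng_weight c E * X E.

Definition mfng_Var (X : {set 'I_n * 'I_n} -> R) : R :=
  mfng_E (fun E => X E ^+ 2) - (mfng_E X) ^+ 2.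

End MFNG.

Section Stats.
Variable (n : nat).
Implicit Types (E : {set 'I_n * 'I_n}).

Definition adj E (u v : 'I_n) : bool := ((u, v) \in E) || ((v, u) \in E).

Definition nbhd E (v : 'I_n) : {set 'I_n} := [set u | adj E v u].

Definition num_edges E : nat := #|[set p in E | upper_pair p]|.

Definition num_stars (d : nat) E : nat :=
  \sum_(v : 'I_n) #|[set D : {set 'I_n} | (D \subset nbhd E v) && (#|D| == d)]|.

Definition num_cliques (t : nat) E : nat :=
  #|[set A : {set 'I_n} | (#|A| == t) &&
      [forall u in A, forall v in A, (u != v) ==> adj E u v]]|.

Definition num_deg (d : nat) E : nat := #|[set v : 'I_n | #|nbhd E v| == d]|.
End Stats.

(* Main.v *)
Require Import Defs.
From HB Require Import structures.
From mathcomp Require Import all_boot all_order all_algebra.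
From mathcomp Require Import ring lra zify.
Set Implicit Arguments. Unset Strict Implicit. Unset Printing Implicit Defensive.
Import Order.TTheory GRing.Theory Num.Theory.
Local Open Scope ring_scope.

Section Gen.
Variable R : realFieldType.

Lemma prod_bool (I : finType) (Q : pred I) (b : I -> bool) :
  \prod_(i | Q i) ((b i)%:R : R) = ([forall i, Q i ==> b i])%:R.
Proof.
case: (boolP [forall i, Q i ==> b i]) => [/forallP H|/forallPn [i]].
  by rewrite big1 // => i Qi; have := H i; rewrite Qi /= => ->.
rewrite negb_imply => /andP[Qi /negbTE bi].
by rewrite (bigD1 i) //= bi mul0r.
Qed.

Lemma sum_sets (T : finType) (h : T -> bool -> R) :
  \sum_(E : {set T}) \prod_p h p (p \in E) = \prod_p (h p true + h p false).
Proof.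
under [RHS]eq_bigr do rewrite -big_bool.
rewrite bigA_distr_bigA /=.
rewrite (reindex (fun f : {ffun T -> bool} => [set p | f p])) /=.
  by apply: eq_bigr => f _; apply: eq_bigr => p _; rewrite inE.
exists (fun E : {set T} => [ffun p => p \in E]) => f _.
  by apply/ffunP => p; rewrite ffunE inE.
by apply/setP => p; rewrite inE ffunE.
Qed.

Lemma sum_transpose (I J K : finType) (h : J -> {ffun I -> K} -> R) :
  \sum_(c : {ffun I -> {ffun J -> K}}) \prod_(r : J) h r [ffun u => c u r]
  = \prod_r \sum_f h r f.
Proof.
rewrite bigA_distr_bigA /=.
rewrite [RHS](reindex (fun c : {ffun I -> {ffun J -> K}} =>
           [ffun r => [ffun u => c u r]])) /=.
  by apply: eq_bigr => c _; apply: eq_bigr => r _; rewrite ffunE.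
exists (fun F : {ffun J -> {ffun I -> K}} => [ffun u => [ffun r => F r u]]) => f _.
  by apply/ffunP => u; apply/ffunP => r; rewrite !ffunE.
by apply/ffunP => r; apply/ffunP => u; rewrite !ffunE.
Qed.

Lemma sum_ind (I : finType) (F : I -> R) (h : I) :
  \sum_g F g * (h == g)%:R = F h.
Proof.
rewrite (bigD1 h) //= eqxx mulr1 big1 ?addr0 // => g gh.
by rewrite eq_sym (negbTE gh) mulr0.
Qed.

Lemma prod_image t n (σ : 'I_t -> 'I_n) (F : 'I_n -> R) :
  injective σ -> (forall u, u \notin [set σ j | j in 'I_t] -> F u = 1) ->
  \prod_u F u = \prod_j F (σ j).
Proof.
move=> inj H.
rewrite (bigID (mem [set σ j | j in 'I_t])) /= [X in _ * X]big1 ?mulr1.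
  by rewrite big_imset /=; [apply: eq_bigl => j; rewrite inE | move=> ? ? _ _ /inj].
by move=> u /H.
Qed.

Lemma sym_prod t n (τ : 'I_t -> 'I_n) (Y : 'I_t -> 'I_t -> R) :
  injective τ -> (forall j q, Y j q = Y q j) ->
  \prod_(j : 'I_t) \prod_(q : 'I_t | (τ j < τ q)%N) Y j q = \prod_(j : 'I_t) \prod_(q : 'I_t | (j < q)%N) Y j q.
Proof.
move=> inj sY.
rewrite !pair_big_dep /=.
rewrite (bigID (fun p : 'I_t * 'I_t => (p.1 < p.2)%N)) /=.
rewrite [RHS](bigID (fun p : 'I_t * 'I_t => (τ p.1 < τ p.2)%N)) /=.
rewrite [X in _ * X = _](reindex (fun p : 'I_t * 'I_t => (p.2, p.1))) /=; last first.
  by exists (fun p : 'I_t * 'I_t => (p.2, p.1)) => -[a b].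
congr (_ * _).
  by apply: eq_bigl => -[a b] /=; rewrite andbC.
apply: eq_big => [[a b]|[a b] _] /=; last by rewrite sY.
have neq : forall (a b : 'I_t), a != b -> τ a != τ b.
  by move=> a' b' /eqP ab; apply/eqP => /inj.
case: (ltngtP a b) => ab /=; case: (ltngtP (τ b) (τ a)) => tab /=.
all: try done.
- by move: (neq a b); rewrite neq_ltn ab -val_eqE /= tab eqxx => /(_ isT).
- by move: tab; rewrite (val_inj ab) ltnn.
Qed.


Lemma sum_ffunS (T : finType) t (F : {ffun 'I_t.+1 -> T} -> R) :
  \sum_g F g = \sum_(x : T) \sum_(g : {ffun 'I_t -> T})
     F [ffun j => if unlift ord0 j is Some j' then g j' else x].
Proof.
rewrite pair_big /=.
rewrite (reindex (fun p : T * {ffun 'I_t -> T} =>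
   [ffun j => if unlift ord0 j is Some j' then p.2 j' else p.1])) //=.
exists (fun g : {ffun 'I_t.+1 -> T} => (g ord0, [ffun j => g (lift ord0 j)])).
  move=> [x g] _ /=; rewrite ffunE unlift_none; congr (_, _).
  by apply/ffunP => j; rewrite !ffunE liftK.
move=> g _; apply/ffunP => j; rewrite !ffunE.
by case: (unliftP ord0 j) => [j' ->|->]; rewrite ?ffunE.
Qed.

Lemma sum_ffun0 (T : finType) (F : {ffun 'I_0 -> T} -> R) g0 :
  \sum_g F g = F g0.
Proof.
rewrite (big_pred1 g0) // => g /=; symmetry; apply/eqP/ffunP => -[] //.
Qed.

Definition mk3 (T : Type) (x y z : T) : {ffun 'I_3 -> T} := [ffun j : 'I_3 => nth x [:: x; y; z] j].
Definition mk2 (T : Type) (x y : T) : {ffun 'I_2 -> T} := [ffun j : 'I_2 => nth x [:: x; y] j].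
Definition mk4 (T : Type) (x y z w : T) : {ffun 'I_4 -> T} :=
  [ffun j : 'I_4 => nth x [:: x; y; z; w] j].

Lemma sum2 (T : finType) (F : {ffun 'I_2 -> T} -> R) :
  \sum_g F g = \sum_x \sum_y F (mk2 x y).
Proof.
rewrite sum_ffunS; apply: eq_bigr => x _; rewrite sum_ffunS; apply: eq_bigr => y _.
rewrite (sum_ffun0 _ [ffun => x]); congr F; apply/ffunP => j; rewrite !ffunE.
case: (unliftP ord0 j) => [j1 ->|->]; rewrite ?liftK ?unlift_none ?ffunE //.
case: (unliftP ord0 j1) => [j2 ->|->]; rewrite ?liftK ?unlift_none ?ffunE //.
by case: j2.
Qed.

Lemma sum3 (T : finType) (F : {ffun 'I_3 -> T} -> R) :
  \sum_g F g = \sum_x \sum_y \sum_z F (mk3 x y z).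
Proof.
rewrite sum_ffunS; apply: eq_bigr => x _; rewrite sum_ffunS; apply: eq_bigr => y _.
rewrite sum_ffunS; apply: eq_bigr => z _.
rewrite (sum_ffun0 _ [ffun => x]); congr F; apply/ffunP => j; rewrite !ffunE.
case: (unliftP ord0 j) => [j1 ->|->]; rewrite ?liftK ?unlift_none ?ffunE //.
case: (unliftP ord0 j1) => [j2 ->|->]; rewrite ?liftK ?unlift_none ?ffunE //.
case: (unliftP ord0 j2) => [j3 ->|->]; rewrite ?liftK ?unlift_none ?ffunE //.
by case: j3.
Qed.

Lemma sum4 (T : finType) (F : {ffun 'I_4 -> T} -> R) :
  \sum_g F g = \sum_x \sum_y \sum_z \sum_w F (mk4 x y z w).
Proof.
rewrite sum_ffunS; apply: eq_bigr => x _; rewrite sum_ffunS; apply: eq_bigr => y _.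
rewrite sum_ffunS; apply: eq_bigr => z _; rewrite sum_ffunS; apply: eq_bigr => w _.
rewrite (sum_ffun0 _ [ffun => x]); congr F; apply/ffunP => j; rewrite !ffunE.
case: (unliftP ord0 j) => [j1 ->|->]; rewrite ?liftK ?unlift_none ?ffunE //.
case: (unliftP ord0 j1) => [j2 ->|->]; rewrite ?liftK ?unlift_none ?ffunE //.
case: (unliftP ord0 j2) => [j3 ->|->]; rewrite ?liftK ?unlift_none ?ffunE //.
case: (unliftP ord0 j3) => [j4 ->|->]; rewrite ?liftK ?unlift_none ?ffunE //.
by case: j4.
Qed.


Section MF.
Variables (n k m : nat) (P : 'M[R]_m) (l : 'I_m -> R).
Hypothesis Psym : forall i j, P i j = P j i.
Hypothesis l1 : \sum_i l i = 1.
Local Notation EE := (@mfng_E R n k m P l).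

Lemma marg t (σ : 'I_t -> 'I_n) (ψ : {ffun 'I_t -> 'I_m} -> R) : injective σ ->
  \sum_(f : {ffun 'I_n -> 'I_m}) (\prod_u l (f u)) * ψ [ffun j => f (σ j)]
  = \sum_(g : {ffun 'I_t -> 'I_m}) (\prod_j l (g j)) * ψ g.
Proof.
move=> inj.
have E1 f : ψ [ffun j => f (σ j)] = \sum_g ψ g * \prod_j (f (σ j) == g j)%:R.
  rewrite -(sum_ind ψ [ffun j => f (σ j)]); apply: eq_bigr => g _; congr (_ * _).
  rewrite prod_bool; congr ((nat_of_bool _)%:R).
  apply/idP/idP => [/eqP <-|/forallP H]; first by apply/forallP => j; rewrite ffunE eqxx.
  by apply/eqP/ffunP => j; rewrite ffunE; apply/eqP; exact: H.
under eq_bigr do rewrite E1 mulr_sumr.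
rewrite exchange_big /=; apply: eq_bigr => g _.
under eq_bigr do rewrite mulrCA.
rewrite -mulr_sumr mulrC; congr (_ * _).
pose pk u : option 'I_t := [pick j | σ j == u].
pose w u i := l i * (if pk u is Some j then (i == g j)%:R else 1).
have pkσ j : pk (σ j) = Some j.
  rewrite /pk; case: pickP => [j' /eqP /inj -> //|/(_ j)]; by rewrite eqxx.
have pkN u : u \notin [set σ j | j in 'I_t] -> pk u = None.
  move=> H; rewrite /pk; case: pickP => // j /eqP Hj.
  by case/imsetP: H; exists j.
transitivity (\sum_(f : {ffun 'I_n -> 'I_m}) \prod_u w u (f u)).
  apply: eq_bigr => f _; rewrite /w big_split /=; congr (_ * _).
  rewrite (prod_image inj) => [|u /pkN -> //].
  by apply: eq_bigr => j _; rewrite pkσ.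
rewrite -bigA_distr_bigA /= (prod_image inj) => [|u /pkN Hu]; last first.
  by rewrite /w Hu; under eq_bigr do rewrite mulr1.
apply: eq_bigr => j _; rewrite /w pkσ.
rewrite (bigD1 (g j)) //= eqxx mulr1 big1 ?addr0 // => i /negbTE ->.
by rewrite mulr0.
Qed.

Lemma level (Φ : {ffun 'I_n -> 'I_m} -> R) :
  \sum_(c : catassign n k m) cat_prob l c * \prod_(r : 'I_k) Φ [ffun u => c u r]
  = (\sum_(f : {ffun 'I_n -> 'I_m}) (\prod_u l (f u)) * Φ f) ^+ k.
Proof.
rewrite -[k in RHS]card_ord -prodr_const.
rewrite -(sum_transpose (fun r f => (\prod_u l (f u)) * Φ f)).
apply: eq_bigr => c _; rewrite big_split /=; congr (_ * _).
rewrite /cat_prob exchange_big /=; apply: eq_bigr => r _; apply: eq_bigr => u _.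
by rewrite ffunE.
Qed.

Lemma core (c : catassign n k m) (F : {set 'I_n * 'I_n}) :
  (forall p, p \in F -> upper_pair p) ->
  \sum_E mfng_weight P l c E * (F \subset E)%:R
  = cat_prob l c * \prod_(q in F) edge_prob P c q.1 q.2.
Proof.
move=> HF; rewrite /mfng_weight.
rewrite (eq_bigr (fun E => cat_prob l c * ((well_formed E)%:R * ((\prod_(p | upper_pair p) (if p \in E then edge_prob P c p.1 p.2 else 1 - edge_prob P c p.1 p.2)) * (F \subset E)%:R)))); last by move=> E _; rewrite !mulrA.
rewrite -mulr_sumr; congr (_ * _).
pose h (p : 'I_n * 'I_n) (b : bool) : R :=
  if upper_pair p then
    (if b then edge_prob P c p.1 p.2 else 1 - edge_prob P c p.1 p.2) *
    (if p \in F then b%:R else 1)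
  else (~~ b)%:R.
transitivity (\sum_(E : {set 'I_n * 'I_n}) \prod_p h p (p \in E)).
  apply: eq_bigr => E _.
  rewrite [RHS](bigID (fun p : 'I_n * 'I_n => upper_pair p)) /=.
  have -> : \prod_(p | ~~ upper_pair p) h p (p \in E) = (well_formed E)%:R.
    rewrite /h; under eq_bigr => p /negbTE Hp do rewrite Hp.
    rewrite prod_bool; congr ((nat_of_bool _)%:R).
    apply/forallP/forallP => H p; have := H p;
      by case: (upper_pair p); case: (p \in E).
  have -> : \prod_(p | upper_pair p) h p (p \in E) =
     (\prod_(p | upper_pair p) (if p \in E then edge_prob P c p.1 p.2
                                 else 1 - edge_prob P c p.1 p.2)) * (F \subset E)%:R.
    rewrite /h; under eq_bigr => p Hp do rewrite Hp.
    rewrite big_split /=; congr (_ * _).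
    rewrite -big_mkcondr /= prod_bool; congr ((nat_of_bool _)%:R).
    apply/forallP/subsetP => H p.
      by move=> pF; have := H p; rewrite pF HF.
    by apply/implyP => /andP[_ /H].
  by rewrite mulrC.
rewrite sum_sets [RHS]big_mkcond; apply: eq_bigr => p _; rewrite /h.
case Up: (upper_pair p); case Fp: (p \in F) => /=.
- by rewrite mulr1 mulr0 addr0.
- by rewrite !mulr1 addrC subrK.
- by move: (HF p Fp); rewrite Up.
- by rewrite add0r.
Qed.

Lemma E_subset (F : {set 'I_n * 'I_n}) :
  (forall p, p \in F -> upper_pair p) ->
  EE (fun E => (F \subset E)%:R)
  = (\sum_(f : {ffun 'I_n -> 'I_m}) (\prod_u l (f u)) * \prod_(q in F) P (f q.1) (f q.2)) ^+ k.
Proof.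
move=> HF; rewrite /mfng_E -level; apply: eq_bigr => c _.
rewrite core //; congr (_ * _).
rewrite /edge_prob exchange_big /=; apply: eq_bigr => r _; apply: eq_bigr => q _.
by rewrite !ffunE.
Qed.

Lemma E_wf (X Y : {set 'I_n * 'I_n} -> R) :
  (forall E, well_formed E -> X E = Y E) -> EE X = EE Y.
Proof.
move=> H; apply: eq_bigr => c _; apply: eq_bigr => E _; rewrite /mfng_weight.
case: (boolP (well_formed E)) => [/H -> //|_].
by rewrite mulr0 !mul0r.
Qed.

Lemma E_sum (I : finType) (Q : pred I) (X : I -> {set 'I_n * 'I_n} -> R) :
  EE (fun E => \sum_(i | Q i) X i E) = \sum_(i | Q i) EE (X i).
Proof.
rewrite /mfng_E.
under eq_bigr do under eq_bigr do rewrite mulr_sumr.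
under eq_bigr do rewrite exchange_big.
by rewrite exchange_big.
Qed.

Lemma E_scale a (X : {set 'I_n * 'I_n} -> R) :
  EE (fun E => a * X E) = a * EE X.
Proof.
rewrite /mfng_E mulr_sumr; apply: eq_bigr => c _; rewrite mulr_sumr.
by apply: eq_bigr => E _; rewrite mulrCA.
Qed.

Lemma E_add (X Y : {set 'I_n * 'I_n} -> R) :
  EE (fun E => X E + Y E) = EE X + EE Y.
Proof.
rewrite /mfng_E -big_split; apply: eq_bigr => c _; rewrite -big_split.
by apply: eq_bigr => E _; rewrite mulrDr.
Qed.


Lemma sum_cst (I : finType) (Q : pred I) (x : R) :
  \sum_(i | Q i) x = x *+ #|[set i | Q i]|.
Proof. by rewrite -sumr_const; apply: eq_bigl => i; rewrite inE. Qed.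

Definition spair (u v : 'I_n) : 'I_n * 'I_n := if (u < v)%N then (u, v) else (v, u).

Lemma adj_spair (E : {set 'I_n * 'I_n}) : well_formed E ->
  forall u v, adj E u v = (spair u v \in E).
Proof.
move=> /forallP wf u v; rewrite /adj /spair.
have nE : forall a b : 'I_n, (b < a)%N -> (a, b) \notin E.
  move=> a b ba; apply/negP => /(implyP (wf (a, b))); rewrite /upper_pair /=.
  by rewrite ltnNge (ltnW ba).
case: ltngtP => h.
- by rewrite (negbTE (nE _ _ h)) orbF.
- by rewrite (negbTE (nE _ _ h)).
- by rewrite (val_inj h) orbb.
Qed.

Lemma wf_nloop (E : {set 'I_n * 'I_n}) v : well_formed E -> (v, v) \notin E.
Proof.
move=> /forallP wf; apply/negP => /(implyP (wf (v, v))).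
by rewrite /upper_pair /= ltnn.
Qed.

Lemma upper_spair u v : u != v -> upper_pair (spair u v).
Proof.
move=> uv; rewrite /spair /upper_pair; case: (ltngtP u v) => //= h.
by move: uv; rewrite (val_inj h) eqxx.
Qed.

Lemma P_spair (f : 'I_n -> 'I_m) u v :
  P (f (spair u v).1) (f (spair u v).2) = P (f u) (f v).
Proof. by rewrite /spair; case: ifP => //= _; rewrite Psym. Qed.

Lemma spair_inj v : injective (spair v).
Proof.
move=> a b; rewrite /spair.
case: ltngtP => h1; case: ltngtP => h2 // [];
  try (by move=> ->); try (by move=> e1 e2; rewrite e1);
  by move=> e1 e2; subst; apply: val_inj; rewrite -?h1 -?h2.
Qed.

Definition starW d := \sum_(i : {ffun 'I_d.+1 -> 'I_m})
        (\prod_(j : 'I_d.+1 | (0 < j)%N) P (i ord0) (i j)) *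
        \prod_(j : 'I_d.+1) l (i j).

Lemma stars_pt d (E : {set 'I_n * 'I_n}) : well_formed E ->
  num_stars d E = (\sum_v \sum_(D : {set 'I_n} | (#|D| == d) && (v \notin D))
                     ([set spair v u | u in D] \subset E))%N.
Proof.
move=> wf; apply: eq_bigr => v _.
rewrite -sum1_card big_mkcond [RHS]big_mkcond; apply: eq_bigr => D _; rewrite inE.
have -> : (D \subset nbhd E v) = (v \notin D) && ([set spair v u | u in D] \subset E).
  apply/subsetP/andP => [H|[vD /subsetP sub] u uD].
    split.
      apply/negP => vD; have := H v vD; rewrite inE adj_spair // /spair ltnn.
      by rewrite (negbTE (wf_nloop v wf)).
    by apply/subsetP => q /imsetP [u uD ->]; have := H u uD; rewrite inE adj_spair.
  by rewrite inE adj_spair //; apply: sub; apply: imset_f.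
by case: (#|D| == d); case: (v \in D); case: (_ \subset E).
Qed.

Lemma star_marg v (D : {set 'I_n}) : v \notin D ->
  \sum_(f : {ffun 'I_n -> 'I_m}) (\prod_u l (f u)) *
     \prod_(q in [set spair v u | u in D]) P (f q.1) (f q.2) = starW #|D|.
Proof.
move=> vD.
pose σ (j : 'I_#|D|.+1) : 'I_n :=
  if unlift ord0 j is Some j' then enum_val j' else v.
have inj : injective σ.
  move=> a b; rewrite /σ.
  case: (unliftP ord0 a) => [a' ->|->]; case: (unliftP ord0 b) => [b' ->|->];
    rewrite ?liftK ?unlift_none //.
  - by move/enum_val_inj => ->.
  - by move=> e; move: (enum_valP a'); rewrite e (negbTE vD).
  - by move=> e; move: (enum_valP b'); rewrite -e (negbTE vD).
rewrite /starW.
under [RHS]eq_bigr do rewrite mulrC.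
rewrite -(marg (fun g : {ffun 'I_#|D|.+1 -> 'I_m} => \prod_(j : 'I_#|D|.+1 | (0 < j)%N) P (g ord0) (g j)) inj).
apply: eq_bigr => f _; congr (_ * _).
rewrite big_imset /=; last by move=> a b _ _; apply: spair_inj.
under eq_bigr do rewrite P_spair.
rewrite big_enum_val /= [RHS]big_mkcond big_ord_recl /= mul1r.
apply: eq_bigr => j _; rewrite !ffunE /σ liftK unlift_none.
by [].
Qed.

Lemma card_star v d :
  #|[set D : {set 'I_n} | (#|D| == d) && (v \notin D)]| = 'C(n.-1, d).
Proof.
rewrite -[n in RHS]card_ord -(cardsC1 v) -cards_draws.
apply: eq_card => D; rewrite !inE andbC; congr (_ && _).
apply/idP/subsetP => [vD u uD|H]; first by rewrite !inE; apply: contraNneq vD => <-.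
by apply/negP => /H; rewrite !inE eqxx.
Qed.

Lemma E_stars d :
  EE (fun E => (num_stars d E)%:R) = (n * 'C(n.-1, d))%:R * (starW d) ^+ k.
Proof.
rewrite (@E_wf _ (fun E => \sum_v \sum_(D : {set 'I_n} | (#|D| == d) && (v \notin D))
                     (([set spair v u | u in D] \subset E))%:R)); last first.
  by move=> E wf; rewrite stars_pt // natr_sum; apply: eq_bigr => v _; rewrite natr_sum.
rewrite E_sum.
under eq_bigr => v _.
  rewrite E_sum.
  under eq_bigr => D /andP [/eqP HD vD].
    rewrite E_subset; last first.
      by move=> q /imsetP [u uD ->]; apply: upper_spair; apply: contraNneq vD => ->.
    rewrite star_marg // HD.
  over.
  rewrite sum_cst card_star.
over.
by rewrite sumr_const card_ord -mulrnA mulr_natl mulnC.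
Qed.

Definition Fcl (A : {set 'I_n}) : {set 'I_n * 'I_n} :=
  [set p : 'I_n * 'I_n | (p.1 \in A) && (p.2 \in A) && (p.1 < p.2)%N].

Definition cliW t := \sum_(i : {ffun 'I_t -> 'I_m})
        (\prod_(j : 'I_t) \prod_(q : 'I_t | (j < q)%N) P (i j) (i q)) *
        \prod_(j : 'I_t) l (i j).

Lemma cliques_pt t (E : {set 'I_n * 'I_n}) : well_formed E ->
  num_cliques t E = (\sum_(A : {set 'I_n} | #|A| == t) (Fcl A \subset E))%N.
Proof.
move=> wf; rewrite /num_cliques -sum1_card big_mkcond [RHS]big_mkcond.
apply: eq_bigr => A _; rewrite inE.
have -> : [forall u in A, forall v in A, (u != v) ==> adj E u v] = (Fcl A \subset E).
  apply/forallP/subsetP => [H [a b]|H u].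
    rewrite inE /= => /andP[/andP[aA bA] ab].
    have ab' : a != b by rewrite neq_ltn ab.
    have := H a; rewrite aA /= => /forallP /(_ b); rewrite bA ab' /=.
    by rewrite adj_spair // /spair ab.
  apply/implyP => uA; apply/forallP => v; apply/implyP => vA; apply/implyP => uv.
  rewrite adj_spair //; apply: H; rewrite /spair; case: ltngtP => h;
    rewrite inE /= ?uA ?vA ?h //.
  by move: uv; rewrite (val_inj h) eqxx.
by case: (#|A| == t); case: (_ \subset E).
Qed.

Lemma clique_marg (A : {set 'I_n}) :
  \sum_(f : {ffun 'I_n -> 'I_m}) (\prod_u l (f u)) *
     \prod_(q in Fcl A) P (f q.1) (f q.2) = cliW #|A|.
Proof.
rewrite /cliW.
under [RHS]eq_bigr do rewrite mulrC.
rewrite -(marg (fun g : {ffun 'I_#|A| -> 'I_m} =>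
            \prod_(j : 'I_#|A|) \prod_(q : 'I_#|A| | (j < q)%N) P (g j) (g q))
            (@enum_val_inj _ (mem A))).
apply: eq_bigr => f _; congr (_ * _).
rewrite (eq_bigl (fun p : 'I_n * 'I_n => (p.1 \in A) && ((p.2 \in A) && (p.1 < p.2)%N)));
  last by move=> p; rewrite inE andbA.
rewrite -(pair_big_dep (fun u => u \in A) (fun u w => (w \in A) && (u < w)%N)
              (fun u w => P (f u) (f w))) /=.
rewrite big_enum_val /=.
under eq_bigr do rewrite big_enum_val_cond /=.
rewrite (sym_prod (Y := fun j q => P (f (enum_val j)) (f (enum_val q))) (@enum_val_inj _ (mem A))); last first.
  by move=> j q; rewrite Psym.
by apply: eq_bigr => j _; apply: eq_bigr => q _; rewrite !ffunE.
Qed.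

Lemma E_cliques t :
  EE (fun E => (num_cliques t E)%:R) = 'C(n, t)%:R * (cliW t) ^+ k.
Proof.
rewrite (@E_wf _ (fun E => \sum_(A : {set 'I_n} | #|A| == t) ((Fcl A \subset E))%:R));
  last by move=> E wf; rewrite cliques_pt // natr_sum.
rewrite E_sum.
under eq_bigr => A /eqP HA.
  rewrite E_subset; last by move=> q; rewrite inE /upper_pair => /andP[_ ->].
  rewrite clique_marg HA.
over.
by rewrite sum_cst card_draws card_ord mulr_natl.
Qed.


Lemma E_sum_seq (I : Type) (r : seq I) (Q : pred I) (X : I -> {set 'I_n * 'I_n} -> R) :
  EE (fun E => \sum_(i <- r | Q i) X i E) = \sum_(i <- r | Q i) EE (X i).
Proof.
rewrite /mfng_E.
under eq_bigr do under eq_bigr do rewrite mulr_sumr.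
under eq_bigr do rewrite exchange_big.
by rewrite exchange_big.
Qed.

Lemma deg_lt (E : {set 'I_n * 'I_n}) v : well_formed E -> (#|nbhd E v| < n)%N.
Proof.
move=> wf.
have : nbhd E v \subset [set~ v].
  apply/subsetP => u; rewrite !inE adj_spair //; apply: contraTneq => ->.
  by rewrite /spair ltnn (negbTE (wf_nloop v wf)).
move/subset_leq_card; rewrite cardsC1 card_ord.
have n0 : (0 < n)%N by apply: leq_ltn_trans (ltn_ord v).
lia.
Qed.

Lemma bin_split x d : (x < n)%N ->
  'C(x, d) = ((x == d) + \sum_(d.+1 <= i < n) 'C(i, d) * (x == i))%N.
Proof.
move=> xn.
rewrite big_geq_mkord /=.
have neqF : forall a b : nat, a <> b -> (a == b) = false by move=> a b /eqP/negbTE.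
case: (ltngtP x d) => h.
- have -> : (\sum_(i < n | d < i) 'C(i, d) * (x == i) = 0)%N.
    by apply: big1 => i di; rewrite neqF ?muln0 //; lia.
  by rewrite (bin_small h).
- rewrite (bigD1 (Ordinal xn)) //= eqxx muln1.
  have -> : (\sum_(i < n | (d < i) && (i != Ordinal xn)) 'C(i, d) * (x == i) = 0)%N.
    apply: big1 => i /andP[_ ix]; rewrite neqF ?muln0 // => e; move/eqP: ix; apply.
    by apply/val_inj; rewrite /= e.
  by rewrite addn0.
- have -> : (\sum_(i < n | d < i) 'C(i, d) * (x == i) = 0)%N.
    by apply: big1 => i di; rewrite neqF ?muln0 //; lia.
  by rewrite h binn.
Qed.

Lemma card_sum (Q : pred 'I_n) : #|[set v | Q v]| = (\sum_v Q v)%N.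
Proof.
rewrite -sum1_card big_mkcond /=; apply: eq_bigr => v _; rewrite inE.
by case: (Q v).
Qed.

Lemma stars_deg_pt d (E : {set 'I_n * 'I_n}) : well_formed E ->
  num_stars d E = (num_deg d E + \sum_(d.+1 <= i < n) 'C(i, d) * num_deg i E)%N.
Proof.
move=> wf.
have -> : num_stars d E = (\sum_v 'C(#|nbhd E v|, d))%N.
  by apply: eq_bigr => v _; exact: cards_draws.
rewrite /num_deg card_sum.
under [X in (_ + X)%N]eq_bigr do rewrite card_sum big_distrr /=.
rewrite exchange_big /= -big_split /=.
by apply: eq_bigr => v _; apply: bin_split; apply: deg_lt.
Qed.

Lemma E_deg_last : (0 < n)%N ->
  EE (fun E => (num_deg n.-1 E)%:R) = EE (fun E => (num_stars n.-1 E)%:R).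
Proof.
move=> n0; apply: E_wf => E wf.
by rewrite stars_deg_pt // prednK // big_geq // addn0.
Qed.

Lemma E_deg d :
  EE (fun E => (num_deg d E)%:R) =
  EE (fun E => (num_stars d E)%:R) -
     \sum_(d.+1 <= i < n) 'C(i, d)%:R * EE (fun E => (num_deg i E)%:R).
Proof.
rewrite (@E_wf (fun E => (num_stars d E)%:R)
   (fun E => (num_deg d E)%:R + \sum_(d.+1 <= i < n) 'C(i, d)%:R * (num_deg i E)%:R)).
  rewrite E_add E_sum_seq.
  under [X in _ = _ + X - _]eq_bigr do rewrite E_scale.
  by rewrite addrK.
move=> E wf; rewrite stars_deg_pt // natrD natr_sum.
by under eq_bigr do rewrite natrM.
Qed.


Lemma starW2 : starW 2 =
  \sum_(i1 < m) \sum_(i2 < m) \sum_(i3 < m) P i1 i2 * P i1 i3 * l i1 * l i2 * l i3.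
Proof.
rewrite /starW sum3; apply: eq_bigr => a _; apply: eq_bigr => b _; apply: eq_bigr => c _.
rewrite big_mkcond !big_ord_recl !big_ord0 /= !ffunE /=.
ring.
Qed.

Lemma cliW3 : cliW 3 =
  \sum_(i < m) \sum_(j < m) \sum_(t < m) P i j * P i t * P j t * l i * l j * l t.
Proof.
rewrite /cliW sum3; apply: eq_bigr => a _; apply: eq_bigr => b _; apply: eq_bigr => c _.
under eq_bigr do rewrite big_mkcond.
rewrite !big_ord_recl !big_ord0 /= !ffunE /=.
ring.
Qed.

Definition s2 := \sum_(i < m) \sum_(j < m) P i j * l i * l j.
Definition WW := \sum_(i1 < m) \sum_(i2 < m) \sum_(i3 < m) P i1 i2 * P i1 i3 * l i1 * l i2 * l i3.

Lemma nth_inj (s : seq 'I_n) x0 : uniq s -> injective (fun j : 'I_(size s) => nth x0 s j).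
Proof. by move=> us a b /eqP; rewrite nth_uniq // => /eqP /val_inj. Qed.

Lemma pair_val x y (Φ : {ffun 'I_n -> 'I_m} -> R) : x != y ->
  (forall f, Φ f = P (f x) (f y)) ->
  \sum_(f : {ffun 'I_n -> 'I_m}) (\prod_u l (f u)) * Φ f = s2.
Proof.
move=> xy HΦ.
have Hu : uniq [:: x; y] by rewrite /= inE andbT.
pose ψ := fun g : {ffun 'I_2 -> 'I_m} => P (g ord0) (g (lift ord0 ord0)).
rewrite (eq_bigr (fun f : {ffun 'I_n -> 'I_m} => (\prod_u l (f u)) *
   ψ [ffun j : 'I_2 => f (nth x [:: x; y] j)])); last by move=> f _; rewrite HΦ /ψ !ffunE.
apply: eq_trans (marg ψ (nth_inj (x0 := x) Hu)) _; rewrite sum2; apply: eq_bigr => a _; apply: eq_bigr => b _.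
rewrite /ψ !big_ord_recl big_ord0 !ffunE /=; ring.
Qed.

Lemma wedge_val c a b (Φ : {ffun 'I_n -> 'I_m} -> R) : uniq [:: c; a; b] ->
  (forall f, Φ f = P (f c) (f a) * P (f c) (f b)) ->
  \sum_(f : {ffun 'I_n -> 'I_m}) (\prod_u l (f u)) * Φ f = WW.
Proof.
move=> Hu HΦ.
pose ψ := fun g : {ffun 'I_3 -> 'I_m} => P (g ord0) (g (lift ord0 ord0)) *
        P (g ord0) (g (lift ord0 (lift ord0 ord0))).
rewrite (eq_bigr (fun f : {ffun 'I_n -> 'I_m} => (\prod_u l (f u)) *
   ψ [ffun j : 'I_3 => f (nth c [:: c; a; b] j)])); last by move=> f _; rewrite HΦ /ψ !ffunE.
apply: eq_trans (marg ψ (nth_inj (x0 := c) Hu)) _; rewrite sum3; apply: eq_bigr => x _; apply: eq_bigr => y _.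
apply: eq_bigr => z _.
rewrite /ψ !big_ord_recl big_ord0 !ffunE /=; ring.
Qed.

Lemma disj_val a b c d (Φ : {ffun 'I_n -> 'I_m} -> R) : uniq [:: a; b; c; d] ->
  (forall f, Φ f = P (f a) (f b) * P (f c) (f d)) ->
  \sum_(f : {ffun 'I_n -> 'I_m}) (\prod_u l (f u)) * Φ f = s2 * s2.
Proof.
move=> Hu HΦ.
pose ψ := fun g : {ffun 'I_4 -> 'I_m} => P (g ord0) (g (lift ord0 ord0)) *
        P (g (lift ord0 (lift ord0 ord0))) (g (lift ord0 (lift ord0 (lift ord0 ord0)))).
rewrite (eq_bigr (fun f : {ffun 'I_n -> 'I_m} => (\prod_u l (f u)) *
   ψ [ffun j : 'I_4 => f (nth a [:: a; b; c; d] j)])); last by move=> f _; rewrite HΦ /ψ !ffunE.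
apply: eq_trans (marg ψ (nth_inj (x0 := a) Hu)) _; rewrite sum4 /s2 mulr_suml; apply: eq_bigr => x _.
rewrite mulr_suml; apply: eq_bigr => y _.
rewrite mulr_sumr; apply: eq_bigr => z _.
rewrite mulr_sumr; apply: eq_bigr => w _.
rewrite /ψ !big_ord_recl big_ord0 !ffunE /=; ring.
Qed.

Definition ee (x y : 'I_n) (E : {set 'I_n * 'I_n}) : R := ((spair x y \in E))%:R.

Lemma edges_pt (E : {set 'I_n * 'I_n}) :
  2 * (num_edges E)%:R = \sum_x \sum_(y | y != x) ee x y E.
Proof.
pose a (x y : 'I_n) : R := ((((x, y) \in E) && (x < y)%N))%:R.
have H1 : (num_edges E)%:R = \sum_x \sum_y a x y.
  rewrite /num_edges.
  have -> : #|[set p in E | upper_pair p]| =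
            (\sum_(p : 'I_n * 'I_n) ((p \in E) && upper_pair p))%N.
    rewrite -sum1_card big_mkcond /=; apply: eq_bigr => p _; rewrite !inE.
    by case: (_ && _).
  by rewrite natr_sum pair_big /=; apply: eq_bigr => -[x y] _.
symmetry; transitivity (\sum_x \sum_y (a x y + a y x)).
  apply: eq_bigr => x _; rewrite big_mkcond; apply: eq_bigr => y _.
  rewrite /ee /a /spair eq_sym; case: (ltngtP x y) => h /=.
  - by rewrite neq_ltn h andbT andbF addr0.
  - by rewrite neq_ltn h orbT andbT andbF add0r.
  - by rewrite (val_inj h) eqxx !andbF addr0.
under eq_bigr do rewrite big_split.
rewrite big_split /= [X in _ + X]exchange_big /= -H1.
by rewrite mulr_natl mulr2n.
Qed.

Lemma ee_mul x y z w (E : {set 'I_n * 'I_n}) :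
  ee x y E * ee z w E = ([set spair x y; spair z w] \subset E)%:R.
Proof.
rewrite /ee -natrM subUset !sub1set.
by case: (_ \in E); case: (_ \in E).
Qed.

Lemma spair_sym x y : spair x y = spair y x.
Proof.
rewrite /spair; case: (ltngtP x y) => h //=.
by rewrite (val_inj h).
Qed.

Lemma spair_mem x y z w : spair x y = spair z w -> (z == x) || (z == y).
Proof.
rewrite /spair; case: ifP => _; case: ifP => _ [e1 e2]; subst;
  by rewrite eqxx ?orbT.
Qed.

Lemma E2 x y z w : x != y -> z != w ->
  EE (fun E => ([set spair x y; spair z w] \subset E)%:R) =
  (\sum_(f : {ffun 'I_n -> 'I_m}) (\prod_u l (f u)) *
     (if spair x y == spair z w then P (f x) (f y)
      else P (f x) (f y) * P (f z) (f w))) ^+ k.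
Proof.
move=> xy zw; rewrite E_subset; last first.
  by move=> q; rewrite !inE => /orP[] /eqP ->; apply: upper_spair.
congr (_ ^+ _); apply: eq_bigr => f _; congr (_ * _).
case: eqP => [<-|ne].
  by rewrite setUid big_set1 P_spair.
rewrite big_setU1 ?big_set1 ?P_spair //.
by rewrite inE; apply/eqP.
Qed.

Lemma card_ne1 x : #|[set y : 'I_n | y != x]| = n.-1.
Proof.
rewrite -[n in RHS]card_ord -(cardsC1 x); apply: eq_card => y; rewrite !inE.
by [].
Qed.

Lemma card_ne2 (Q : pred 'I_n) a b : a != b ->
  (forall w, Q w = (w != a) && (w != b)) -> #|[set w | Q w]| = (n - 2)%N.
Proof.
move=> ab HQ.
have -> : [set w | Q w] = [set~ a] :\ b.
  by apply/setP => w; rewrite !inE HQ andbC.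
have := cardsD1 b [set~ a]; rewrite !inE eq_sym ab cardsC1 card_ord /=.
lia.
Qed.

Lemma card_ne3 (Q : pred 'I_n) a b c : a != b -> c != a -> c != b ->
  (forall w, Q w = [&& w != a, w != b & w != c]) -> #|[set w | Q w]| = (n - 3)%N.
Proof.
move=> ab ca cb HQ.
have -> : [set w | Q w] = [set~ a] :\ b :\ c.
  apply/setP => w; rewrite !inE HQ.
  by case: (w != a); case: (w != b); case: (w != c).
have := cardsD1 c ([set~ a] :\ b); rewrite !inE ca cb /=.
have := cardsD1 b [set~ a]; rewrite !inE eq_sym ab cardsC1 card_ord /=.
lia.
Qed.

Definition Tval := (s2 ^+ k + WW ^+ k *+ (n - 2)) + (s2 ^+ k + WW ^+ k *+ (n - 2))
   + (WW ^+ k + (WW ^+ k + (s2 * s2) ^+ k *+ (n - 3))) *+ (n - 2).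

Lemma inner x y : x != y ->
  \sum_z \sum_(w | w != z) EE (fun E => ([set spair x y; spair z w] \subset E)%:R)
  = Tval.
Proof.
move=> xy.
have yx : y != x by rewrite eq_sym.
rewrite (bigD1 x) //= [X in _ + X](bigD1 y) //=.
have A : \sum_(w | w != x) EE (fun E => ([set spair x y; spair x w] \subset E)%:R)
         = s2 ^+ k + WW ^+ k *+ (n - 2).
  rewrite (bigD1 y) //=; congr (_ + _).
    by rewrite E2 // eqxx; congr (_ ^+ _); apply: (pair_val xy).
  rewrite (eq_bigr (fun _ => WW ^+ k)).
    by rewrite sum_cst (card_ne2 xy).
  move=> w /andP[wx wy]; rewrite E2 //; last by rewrite eq_sym.
  have -> : (spair x y == spair x w) = false.
    by apply/negbTE; apply: contra wy => /eqP /spair_inj ->.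
  congr (_ ^+ _); apply: (wedge_val (c := x) (a := y) (b := w)) => //.
  by rewrite /= !inE !negb_or xy (eq_sym x w) wx (eq_sym y w) wy.
have B : \sum_(w | w != y) EE (fun E => ([set spair x y; spair y w] \subset E)%:R)
         = s2 ^+ k + WW ^+ k *+ (n - 2).
  rewrite (bigD1 x) //=; congr (_ + _).
    by rewrite E2 // -spair_sym eqxx; congr (_ ^+ _); apply: (pair_val xy).
  rewrite (eq_bigr (fun _ => WW ^+ k)).
    by rewrite sum_cst (card_ne2 yx).
  move=> w /andP[wy wx]; rewrite E2 //; last by rewrite eq_sym.
  have -> : (spair x y == spair y w) = false.
    by apply/negbTE; apply: contra wx; rewrite spair_sym => /eqP /spair_inj ->.
  congr (_ ^+ _); apply: (wedge_val (c := y) (a := x) (b := w)) => [|f].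
    by rewrite /= !inE !negb_or yx (eq_sym y w) wy (eq_sym x w) wx.
  by rewrite Psym.
have C : \sum_(z | (true && (z != x)) && (z != y)) \sum_(w | w != z)
           EE (fun E => ([set spair x y; spair z w] \subset E)%:R)
         = (WW ^+ k + (WW ^+ k + (s2 * s2) ^+ k *+ (n - 3))) *+ (n - 2).
  rewrite (eq_bigr (fun _ => WW ^+ k + (WW ^+ k + (s2 * s2) ^+ k *+ (n - 3)))).
    by rewrite sum_cst (card_ne2 xy).
  move=> z /andP[/andP[_ zx] zy].
  have yz : y != z by rewrite eq_sym.
  rewrite (bigD1 x) //=; last by rewrite eq_sym.
  rewrite (bigD1 y) //=; last by rewrite yx andbT eq_sym.
  congr (_ + (_ + _)).
  - rewrite E2 //.
    have -> : (spair x y == spair z x) = false.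
      by apply/negbTE; apply: contra zy; rewrite (spair_sym z) => /eqP /spair_inj ->.
    congr (_ ^+ _); apply: (wedge_val (c := x) (a := y) (b := z)) => [|f].
      by rewrite /= !inE !negb_or xy (eq_sym x z) zx (eq_sym y z) zy.
    by rewrite (Psym (f z)).
  - rewrite E2 //.
    have -> : (spair x y == spair z y) = false.
      by apply/negbTE; apply: contra zx; rewrite spair_sym (spair_sym z) => /eqP /spair_inj ->.
    congr (_ ^+ _); apply: (wedge_val (c := y) (a := x) (b := z)) => [|f].
      by rewrite /= !inE !negb_or yx (eq_sym y z) zy (eq_sym x z) zx.
    by rewrite (Psym (f z)) (Psym (f x)).
  rewrite (eq_bigr (fun _ => (s2 * s2) ^+ k)).
    by rewrite sum_cst (card_ne3 (a := z) (b := x) (c := y)) // => w; rewrite andbA.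
  move=> w /andP[/andP[wz wx] wy]; rewrite E2 //; last by rewrite eq_sym.
  have -> : (spair x y == spair z w) = false.
    by apply/negbTE/negP => /eqP /spair_mem /orP[] /eqP e; [move: zx|move: zy]; rewrite e eqxx.
  congr (_ ^+ _); apply: (disj_val (a := x) (b := y) (c := z) (d := w)) => //.
  rewrite /= !inE !negb_or xy (eq_sym x z) zx (eq_sym x w) wx (eq_sym y z) zy.
  by rewrite (eq_sym y w) wy (eq_sym z w) wz.
by rewrite A B C /Tval addrA.
Qed.

Lemma E_edge1 : EE (fun E => 2 * (num_edges E)%:R) = s2 ^+ k *+ n.-1 *+ n.
Proof.
rewrite (@E_wf _ (fun E => \sum_x \sum_(y | y != x) (([set spair x y] \subset E))%:R));
  last first.
  move=> E _; rewrite edges_pt; apply: eq_bigr => x _; apply: eq_bigr => y _.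
  by rewrite /ee sub1set.
rewrite E_sum (eq_bigr (fun _ => s2 ^+ k *+ n.-1)); first by rewrite sumr_const card_ord.
move=> x _; rewrite E_sum (eq_bigr (fun _ => s2 ^+ k)); first by rewrite sum_cst card_ne1.
move=> y yx; rewrite E_subset; last first.
  by move=> q; rewrite inE => /eqP ->; apply: upper_spair; rewrite eq_sym.
congr (_ ^+ _); apply: (pair_val (x := x) (y := y)) => [|f]; first by rewrite eq_sym.
by rewrite big_set1 P_spair.
Qed.

Lemma E_edge2 : EE (fun E => (2 * (num_edges E)%:R) ^+ 2) = Tval *+ n.-1 *+ n.
Proof.
rewrite (@E_wf _ (fun E => \sum_x \sum_(y | y != x) \sum_z \sum_(w | w != z)
             (([set spair x y; spair z w] \subset E))%:R)); last first.
  move=> E _; rewrite edges_pt expr2 mulr_suml; apply: eq_bigr => x _.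
  rewrite mulr_suml; apply: eq_bigr => y _; rewrite mulr_sumr; apply: eq_bigr => z _.
  by rewrite mulr_sumr; apply: eq_bigr => w _; rewrite ee_mul.
rewrite E_sum (eq_bigr (fun _ => Tval *+ n.-1)); first by rewrite sumr_const card_ord.
move=> x _; rewrite E_sum (eq_bigr (fun _ => Tval)); first by rewrite sum_cst card_ne1.
move=> y yx; rewrite E_sum.
under eq_bigr do rewrite E_sum.
by apply: inner; rewrite eq_sym.
Qed.
End MF.
End Gen.


Lemma bin2_2 a : ('C(a, 2) * 2 = a * a.-1)%N.
Proof.
elim: a => [|a IH] //; rewrite binS bin1 mulnDl IH.
case: a IH => //= a _; nia.
Qed.


Theorem corollary2 (R : realFieldType) (m k n : nat)
    (l : 'I_m -> R) (P : 'M[R]_m) :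
  (1 <= m)%N -> (1 <= k)%N -> (2 <= n)%N ->
  (forall i, 0 <= l i) -> \sum_(i < m) l i = 1 ->
  P^T = P -> (forall i j, 0 <= P i j <= 1) ->
  let EX := @mfng_E R n k m P l in
  let s := \sum_(i < m) \sum_(j < m) P i j * l i * l j in
  (* (i) *)
  (forall d : nat, (1 <= d <= n.-1)%N ->
     EX (fun E => (num_stars d E)%:R) =
     (n * 'C(n.-1, d))%:R *
     (\sum_(i : {ffun 'I_d.+1 -> 'I_m})
        (\prod_(j : 'I_d.+1 | (0 < j)%N) P (i ord0) (i j)) *
        \prod_(j : 'I_d.+1) l (i j)) ^+ k) /\
  EX (fun E => (num_stars 2 E)%:R) =
    (n * 'C(n.-1, 2))%:R *
    (\sum_(i1 < m) \sum_(i2 < m) \sum_(i3 < m)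
       P i1 i2 * P i1 i3 * l i1 * l i2 * l i3) ^+ k /\
  (* (ii) *)
  @mfng_Var R n k m P l (fun E => (num_edges E)%:R) =
    'C(n, 2)%:R * s ^+ k * (1 - 'C(n, 2)%:R * s ^+ k)
    + 2 * EX (fun E => (num_stars 2 E)%:R)
    + ('C(n, 2) * 'C(n - 2, 2))%:R * s ^+ (2 * k) /\
  (* (iii) *)
  (forall t : nat, (2 <= t <= n)%N ->
     EX (fun E => (num_cliques t E)%:R) =
     'C(n, t)%:R *
     (\sum_(i : {ffun 'I_t -> 'I_m})
        (\prod_(j : 'I_t) \prod_(q : 'I_t | (j < q)%N) P (i j) (i q)) *
        \prod_(j : 'I_t) l (i j)) ^+ k) /\
  EX (fun E => (num_cliques 3 E)%:R) =
    'C(n, 3)%:R *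
    (\sum_(i < m) \sum_(j < m) \sum_(t < m)
       P i j * P i t * P j t * l i * l j * l t) ^+ k /\
  (* (iv) *)
  EX (fun E => (num_deg n.-1 E)%:R) = EX (fun E => (num_stars n.-1 E)%:R) /\
  (forall d : nat, (1 <= d <= n - 2)%N ->
     EX (fun E => (num_deg d E)%:R) =
     EX (fun E => (num_stars d E)%:R) -
     \sum_(d.+1 <= i < n) 'C(i, d)%:R * EX (fun E => (num_deg i E)%:R)).
Proof.
move=> m1 k1 n2 l0 l1 PT P01 EX s.
have Psym : forall i j, P i j = P j i by move=> i j; rewrite -[in LHS]PT mxE.
rewrite /EX /s.
have S2 : @mfng_E R n k m P l (fun E => (num_stars 2 E)%:R) = (n * 'C(n.-1, 2))%:R *
    (\sum_(i1 < m) \sum_(i2 < m) \sum_(i3 < m) P i1 i2 * P i1 i3 * l i1 * l i2 * l i3) ^+ k.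
  by rewrite (E_stars n k Psym l1) starW2.
split; first by move=> d _; rewrite (E_stars n k Psym l1).
split; first exact: S2.
split.
  rewrite /mfng_Var S2.
  have h1 : 2 * @mfng_E R n k m P l (fun E => (num_edges E)%:R) = s2 P l ^+ k *+ n.-1 *+ n.
    by rewrite -E_scale (E_edge1 n k Psym l1).
  have h2 : 4 * @mfng_E R n k m P l (fun E => (num_edges E)%:R ^+ 2) = Tval n k P l *+ n.-1 *+ n.
    rewrite -E_scale -(E_edge2 n k Psym l1); apply: E_wf => E _ /=; ring.
  move: h1 h2; rewrite /Tval /s2 /WW.
  set a := \sum_(i < m) \sum_(j < m) P i j * l i * l j.
  set b := \sum_(i1 < m) \sum_(i2 < m) \sum_(i3 < m) P i1 i2 * P i1 i3 * l i1 * l i2 * l i3.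
  set E1 := @mfng_E R n k m P l (fun E => (num_edges E)%:R).
  set E2 := @mfng_E R n k m P l (fun E => (num_edges E)%:R ^+ 2).
  move=> h1 h2.
  have hc2 := bin2_2 n.
  have hc1 := bin2_2 n.-1.
  have hc3 := bin2_2 (n - 2).
  have e1 : (n.-1.-1 = n - 2)%N by lia.
  have e2 : ((n - 2).-1 = n - 3)%N by lia.
  rewrite e1 in hc1; rewrite e2 in hc3.
  have rc2 : 'C(n, 2)%:R * 2 = n%:R * n.-1%:R :> R by rewrite -!natrM hc2.
  have rc1 : 'C(n.-1, 2)%:R * 2 = n.-1%:R * (n - 2)%:R :> R by rewrite -!natrM hc1.
  have rc3 : 'C(n - 2, 2)%:R * 2 = (n - 2)%:R * (n - 3)%:R :> R by rewrite -!natrM hc3.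
  have E1e : E1 = a ^+ k *+ n.-1 *+ n / 2 by rewrite -h1; field.
  have E2e : E2 = (a ^+ k + b ^+ k *+ (n - 2) + (a ^+ k + b ^+ k *+ (n - 2)) +
         (b ^+ k + (b ^+ k + (a * a) ^+ k *+ (n - 3))) *+ (n - 2)) *+ n.-1 *+ n / 4.
    by rewrite -h2; field.
  clearbody a b E1 E2.
  rewrite E1e E2e.
  have c2e : 'C(n, 2)%:R = n%:R * n.-1%:R / 2 :> R by rewrite -rc2; field.
  have c1e : 'C(n.-1, 2)%:R = n.-1%:R * (n - 2)%:R / 2 :> R by rewrite -rc1; field.
  have c3e : 'C(n - 2, 2)%:R = (n - 2)%:R * (n - 3)%:R / 2 :> R by rewrite -rc3; field.
  rewrite mulnC exprM exprMn !natrM c2e c1e c3e.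
  by field.
split; first by move=> t _; rewrite (E_cliques n k Psym l1).
split; first by rewrite (E_cliques n k Psym l1) cliW3.
split; first by rewrite E_deg_last // ltnW.
by move=> d _; rewrite E_deg.
Qed.
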